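(* Let $\mathcal H$ be a higraph and $k\ge1$. For any two paths $\rho,\rho'$ in $\mathcal H$, the number of $k$-step gluing sequences from $\rho$ to $\rho'$ is a multiple of $k!$.
   Context: A directed hypergraph $\mathcal H=(\mathcal V,\mathcal E)$ has edges $\varepsilon=(I,J)\in2^{\mathcal V}\times2^{\mathcal V}$, source $s(\varepsilon)=I$, target $t(\varepsilon)=J$. It is a higraph if for all edges $\varepsilon,\varepsilon'$: (Transitive) if $t(\varepsilon)\cap s(\varepsilon')\ne\emptyset$ then it equals $\{K\}$ for a single vertex $K$, the unions $s(\varepsilon)\cup(s(\varepsilon')\setminus\{K\})$ and $(t(\varepsilon)\setminus\{K\})\cup t(\varepsilon')$ are unions of disjoint sets, and their pair is an edge; (Acyclic) if $t(\varepsilon)\cap s(\varepsilon')$ and $t(\varepsilon')\cap s(\varepsilon)$ are both non-empty then $\varepsilon=\varepsilon'=(\{K\},\{K\})$ for some $K$. A path $\rho=(T,\rho)$ is a non-empty finite directed tree $T=(V,E)$ (digraph whose underlying undirected graph is a tree; elements of $V$ are nodes, of $E$ arrows, called breaks) with a map $\rho:V\to\mathcal E$ such that (1) for each arrow $e$, $t(\rho(s(e)))\cap s(\rho(t(e)))$ is a single vertex $\rho(e)$; (2) distinct arrows with the same source node or same target node have distinct $\rho(e)$. Paths related by a tree isomorphism compatible with labels are identified. For a subpath $\rho'$ (restriction to a subtree), $s(\rho')=\bigcup_v(s(\rho'(v))\setminus\{\rho'(e):t(e)=v\})$ and $t(\rho')=\bigcup_v(t(\rho'(v))\setminus\{\rho'(e):s(e)=v\})$.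 Gluing at a break $e$: $q(\rho,e)$ is the path whose tree is obtained by contracting the arrow $e$ to a single node $v^*$ (all other arrows kept, those incident to $e$'s endpoints now incident to $v^*$), with labels unchanged away from $v^*$ and $\rho(v^* )=(s(\rho'),t(\rho'))$ where $\rho'$ is the subpath on the two endpoints of $e$. A $k$-step gluing sequence on $\rho_1$ is a tuple $(e_1,\dots,e_k)$ with $e_i$ a break of $\rho_i$ and $\rho_{i+1}=q(\rho_i,e_i)$; it goes from $\rho_1$ to $\rho_{k+1}$. Sequences related by isomorphisms of the corresponding paths that identify the corresponding breaks are identified. *)

(* Defs.v *)
From mathcomp Require Import all_boot.
From mathcomp Require Import boolp classical_sets.

Set Implicit Arguments.
Unset Strict Implicit.
Unset Printing Implicit Defensive.

Local Open Scope classical_set_scope.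

Section Higraph.
Variable V : Type.

Definition hedge := (set V * set V)%type.
Definition hsrc (eps : hedge) : set V := eps.1.
Definition htgt (eps : hedge) : set V := eps.2.

Definition transitive_hg (E : set hedge) : Prop :=
  forall eps eps', E eps -> E eps' ->
    htgt eps `&` hsrc eps' !=set0 ->
    exists K : V,
      htgt eps `&` hsrc eps' = [set K] /\
      [disjoint hsrc eps & hsrc eps' `\ K] /\
      [disjoint htgt eps `\ K & htgt eps'] /\
      E (hsrc eps `|` (hsrc eps' `\ K), (htgt eps `\ K) `|` htgt eps').

Definition acyclic_hg (E : set hedge) : Prop :=
  forall eps eps', E eps -> E eps' ->
    htgt eps `&` hsrc eps' !=set0 -> htgt eps' `&` hsrc eps !=set0 ->
    eps = eps' /\ exists K : V, eps = ([set K], [set K]).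

Definition higraph (E : set hedge) : Prop := transitive_hg E /\ acyclic_hg E.

Record ptree (N : finType) := PTree {
  pnodes : {set N};
  parrows : {set N * N};
  plab : N -> hedge
}.

Section Paths.
Variable N : finType.
Implicit Types (r : ptree N).

Definition uadj r : rel N := fun x y => ((x, y) \in parrows r) || ((y, x) \in parrows r).

(** the underlying undirected graph is a tree: non-empty, connected, acyclic
    (no loops, no pair of opposite arrows = no 2-cycles, no simple cycles of
    length >= 3). *)
Definition directed_tree r : Prop :=
  (pnodes r != finset.set0) /\
  [/\ {in parrows r, forall a, (a.1 \in pnodes r) && (a.2 \in pnodes r)},
      {in parrows r, forall a, a.1 != a.2},
      {in parrows r, forall a, (a.2, a.1) \notin parrows r},
      {in pnodes r &, forall x y, connect (uadj r) x y} &
      forall c : seq N, 3 <= size c -> ~~ ucycleb (uadj r) c].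

Definition brkset r (e : N * N) : set V := htgt (plab r e.1) `&` hsrc (plab r e.2).

Definition is_path (E : set hedge) r : Prop :=
  [/\ directed_tree r,
      {in pnodes r, forall v, E (plab r v)},
      {in parrows r, forall e, exists K : V, brkset r e = [set K]} &
      (* (2) *)
      {in parrows r &, forall e e', e != e' ->
          (e.1 = e'.1 \/ e.2 = e'.2) -> brkset r e <> brkset r e'}].

Definition sub_src r (S : {set N}) : set V :=
  [set x | exists2 v, v \in S & hsrc (plab r v) x /\
     ~ (exists2 e, (e \in parrows r) && (e.1 \in S) & e.2 = v /\ brkset r e x)].

Definition sub_tgt r (S : {set N}) : set V :=
  [set x | exists2 v, v \in S & htgt (plab r v) x /\
     ~ (exists2 e, (e \in parrows r) && (e.2 \in S) & e.1 = v /\ brkset r e x)].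

(** gluing at the break e = (u, w): the arrow e is contracted to the node u
    (which plays the role of the new node v-star), the node w is removed, arrows incident to w
    are redirected to u, and u is relabelled by (s(rho'), t(rho')) where rho'
    is the subpath on {u, w}. *)
Definition glue r (e : N * N) : ptree N :=
  let u := e.1 in let w := e.2 in
  let ren := fun x : N => if x == w then u else x in
  PTree (pnodes r :\ w)%SET
        [set (ren a.1, ren a.2) | a in (parrows r :\ e)%SET]%SET
        (fun x => if x == u then (sub_src r [set u; w]%SET, sub_tgt r [set u; w]%SET)
                  else plab r x).

Fixpoint is_glue_seq r (s : seq (N * N)) : Prop :=
  match s with
  | [::] => True
  | e :: s' => e \in parrows r /\ is_glue_seq (glue r e) s'
  end.

Fixpoint glue_end r (s : seq (N * N)) : ptree N :=
  match s with
  | [::] => r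
  | e :: s' => glue_end (glue r e) s'
  end.

End Paths.

Definition is_iso (N1 N2 : finType) (f : N1 -> N2) (r1 : ptree N1) (r2 : ptree N2) : Prop :=
  [/\ {in pnodes r1 &, injective f},
      (f @: pnodes r1)%SET = pnodes r2,
      [set (f a.1, f a.2) | a in parrows r1]%SET = parrows r2 &
      {in pnodes r1, forall x, plab r2 (f x) = plab r1 x}].

Definition iso_ptree (N1 N2 : finType) (r1 : ptree N1) (r2 : ptree N2) : Prop :=
  exists f : N1 -> N2, is_iso f r1 r2.

Fixpoint seq_ident (N : finType) (r1 : ptree N) (s1 : seq (N * N))
    (r2 : ptree N) (s2 : seq (N * N)) : Prop :=
  match s1, s2 with
  | [::], [::] => iso_ptree r1 r2
  | e1 :: s1', e2 :: s2' =>
      (exists f : N -> N, is_iso f r1 r2 /\ (f e1.1, f e1.2) = e2) /\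
      seq_ident (glue r1 e1) s1' (glue r2 e2) s2'
  | _, _ => False
  end.

Definition glue_seqs (N N' : finType) (r : ptree N) (r' : ptree N') (k : nat)
  : {set k.-tuple (N * N)} :=
  [set s : k.-tuple (N * N) | `[< is_glue_seq r s /\ iso_ptree (glue_end r s) r' >] ]%SET.

Definition num_glue_seqs (N N' : finType) (r : ptree N) (r' : ptree N') (k : nat) : nat :=
  #|[set [set t in glue_seqs r r' k | `[< seq_ident r s r t >] ]%SET
       | s : k.-tuple (N * N) in glue_seqs r r' k]%SET|.

End Higraph.

(* Main.v *)
Require Import Defs.
From mathcomp Require Import all_boot.
From mathcomp Require Import boolp classical_sets.

Set Implicit Arguments.
Unset Strict Implicit.
Unset Printing Implicit Defensive.



Section Tree.
Variable N : finType.

Definition xadj (X : {set N * N}) : rel N :=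
  fun x y => ((x, y) \in X) || ((y, x) \in X).

Lemma xadj_sym X : symmetric (xadj X).
Proof. by move=> x y; rewrite /xadj orbC. Qed.

Lemma xconnect_sym X x y : connect (xadj X) x y = connect (xadj X) y x.
Proof. exact: (sym_connect_sym (xadj_sym X)). Qed.

Lemma xadj_mono (X Y : {set N * N}) : X \subset Y -> subrel (xadj X) (xadj Y).
Proof.
move=> /fintype.subsetP sXY x y /orP[/sXY h|/sXY h]; apply/orP; by [left|right].
Qed.

Lemma xconnect_mono (X Y : {set N * N}) x y :
  X \subset Y -> connect (xadj X) x y -> connect (xadj Y) x y.
Proof. move=> sXY; apply: connect_sub => u v /(xadj_mono sXY); exact: connect1. Qed.

Definition tree_ok (S : {set N}) (A : {set N * N}) :=
  [/\ {in A, forall e, (e.1 \in S) && (e.2 \in S)},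
      {in S &, forall x y, connect (xadj A) x y} &
      {in A, forall e, ~~ connect (xadj (A :\ e)) e.1 e.2}].

Definition auto_ok (f : N -> N) (S : {set N}) (A : {set N * N}) :=
  [/\ {in S &, injective f}, (f @: S)%SET = S &
      [set (f a.1, f a.2) | a in A]%SET = A].

Definition nb (A : {set N * N}) x := [set y | xadj A x y].

Section TreeFacts.
Variables (S : {set N}) (A : {set N * N}).
Hypothesis tS : tree_ok S A.

Lemma arrow_in e : e \in A -> e.1 \in S /\ e.2 \in S.
Proof. by case: tS => h _ _ /h /andP. Qed.

Lemma xadj_in x y : xadj A x y -> x \in S /\ y \in S.
Proof.
by case/orP=> /arrow_in [] //= ? ?; split.
Qed.

Lemma noloop e : e \in A -> e.1 != e.2.
Proof.
case: tS => _ _ hb eA; apply/negP => /eqP h; move: (hb e eA); rewrite h connect0.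
by [].
Qed.

Lemma noloop2 x : (x, x) \notin A.
Proof. by apply/negP => /noloop /=; rewrite eqxx. Qed.

Lemma noopp e : e \in A -> (e.2, e.1) \notin A.
Proof.
case: tS => _ _ hb eA; apply/negP => h.
have ne : (e.2, e.1) != e.
  apply/negP => /eqP he; move: (noloop eA); have := congr1 fst he => /= ->.
  by rewrite eqxx.
move: (hb e eA); rewrite connect1 //= /xadj; apply/orP; right.
by rewrite in_setD1 ne h.
Qed.

Lemma bridge e : e \in A -> ~ connect (xadj (A :\ e)) e.1 e.2.
Proof. by case: tS => _ _ hb /hb /negP. Qed.

Variable f : N -> N.
Hypothesis af : auto_ok f S A.

Lemma fS x : x \in S -> f x \in S.
Proof. by case: af => _ h _ xS; rewrite -h imset_f. Qed.

Lemma fsurj y : y \in S -> exists2 x, x \in S & y = f x.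
Proof. by case: af => _ h _; rewrite -{1}h => /imsetP. Qed.

Lemma mem_auto x y : x \in S -> y \in S -> ((f x, f y) \in A) = ((x, y) \in A).
Proof.
case: af => fi _ hA xS yS; apply/idP/idP => h; last first.
  by rewrite -hA; apply/imsetP; exists (x, y).
move: h; rewrite -{1}hA => /imsetP [a aA [e1 e2]].
have [a1S a2S] := arrow_in aA.
by rewrite (fi _ _ xS a1S e1) (fi _ _ yS a2S e2) -surjective_pairing.
Qed.

Lemma xadj_auto x y : x \in S -> y \in S -> xadj A (f x) (f y) = xadj A x y.
Proof. by move=> xS yS; rewrite /xadj !mem_auto. Qed.

Lemma nb_auto x : x \in S -> nb A (f x) = (f @: nb A x)%SET.
Proof.
move=> xS; apply/setP => y; rewrite inE; apply/idP/imsetP.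
  move=> h; have [_ yS] := xadj_in h; have [y' y'S yE] := fsurj yS.
  by exists y' => //; rewrite inE -(xadj_auto xS y'S) -yE.
case=> y'; rewrite inE => h ->; have [_ y'S] := xadj_in h.
by rewrite xadj_auto.
Qed.

Lemma card_nb_auto x : x \in S -> #|nb A (f x)| = #|nb A x|.
Proof.
move=> xS; rewrite nb_auto // card_in_imset //.
case: af => fi _ _ u v; rewrite !inE => /xadj_in [_ uS] /xadj_in [_ vS].
exact: fi.
Qed.


Lemma card_le1 (B : {set N}) y z : #|B| <= 1 -> y \in B -> z \in B -> z = y.
Proof.
move=> hB yB zB; apply/eqP; apply: contraLR hB => nzy; rewrite -ltnNge.
have sub : [set y; z] \subset B.
  by apply/fintype.subsetP => w; rewrite !inE => /orP[] /eqP ->.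
by apply: leq_trans (subset_leq_card sub); rewrite cards2 eq_sym nzy.
Qed.

End TreeFacts.

Section Leaf.
Variables (S : {set N}) (A : {set N * N}).
Hypothesis tS : tree_ok S A.

Lemma leaf_exists : S != finset.set0 -> exists2 x, x \in S & #|nb A x| <= 1.
Proof.
case/set0Pn => x0 x0S.
pose P := fun m => `[< exists x p, [/\ x \in S, uniq (x :: p), path (xadj A) x p & size p = m] >].
have exP : exists i, P i by exists 0; apply/asboolP; exists x0, [::].
have ubP : forall i, P i -> i <= #|N|.
  move=> i /asboolP [x [p [_ u _ <-]]]; have /card_uniqP /= h := u.
  by apply: ltnW; have := max_card (mem (x :: p)); rewrite h.
case: (ex_maxnP exP ubP) => m /asboolP [x [p [xS u pth sz]]] mx.
exists x => //.
have key : forall z, xadj A x z -> z \in p.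
  move=> z hz; apply/negPn/negP => zp.
  have zx : z != x.
    apply/eqP => ezx; move: hz; rewrite ezx /xadj orbb; apply/negP; exact: noloop2 tS x.
  have : P (size p).+1.
    apply/asboolP; exists z, (x :: p); split => //.
    - by have [_ ] := xadj_in tS hz.
    - by rewrite cons_uniq u andbT inE negb_or zx zp.
    - by rewrite /= pth andbT xadj_sym.
  by move/mx; rewrite sz ltnn.
case: p u pth sz key => [|y p'] u pth sz key.
  rewrite (_ : nb A x = finset.set0) ?cards0 //; apply/setP => z.
  by rewrite !inE; apply/negP => /key.
apply: (leq_trans (subset_leq_card (_ : nb A x \subset [set y]%SET))); last by rewrite cards1.
apply/fintype.subsetP => z; rewrite /nb !inE => hz; apply/negPn/negP => zy.
have zp : z \in p' by move: (key z hz); rewrite inE (negbTE zy).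
move: u; rewrite cons_uniq => /andP[xn u].
have zx : z != x by apply: contraNneq xn => <-; rewrite inE zp orbT.
have yx : y != x by apply: contraNneq xn => <-; rewrite inE eqxx.
pose c := if (x, z) \in A then (x, z) else (z, x).
have cA : c \in A by rewrite /c; case: ifP => // /negbT h; move: hz; rewrite /xadj (negbTE h).
have cE : c = (x, z) \/ c = (z, x) by rewrite /c; case: ifP; [left|right].
move: pth xn => /= /andP[hxy pth] xn.
case/path.splitP: zp pth xn => p1 p2 pth xn.
have hyz : connect (xadj (A :\ c)) y z.
  apply/connectP; exists (rcons p1 z); last by rewrite last_rcons.
  apply: (@sub_in_path _ (predC1 x) (xadj A)).
  - move=> u1 v1; rewrite !inE => ux vx /orP[h|h]; apply/orP; [left|right];
      rewrite in_setD1 h andbT; case: cE => ->; rewrite xpair_eqE;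
      by rewrite ?(negbTE ux) ?(negbTE vx) ?andbF.
  - apply/allP => w hw; rewrite /= ; apply: contraNneq xn => <-.
    by rewrite inE mem_cat; move: hw; rewrite inE => /orP[->|->]; rewrite ?orbT.
  - by move: pth; rewrite cat_path => /andP[].
have hxy' : xadj (A :\ c) x y.
  move: hxy => /orP[h|h]; apply/orP; [left|right]; rewrite in_setD1 h andbT;
    case: cE => ->; rewrite xpair_eqE ?eqxx ?(negbTE zy) ?(negbTE yx) ?andbF //=.
  - by rewrite eq_sym.
  - by rewrite andbT eq_sym.
have hxz : connect (xadj (A :\ c)) x z by apply: connect_trans (connect1 hxy') hyz.
apply: (bridge tS cA); case: cE hxz => -> hxz; first exact: hxz.
rewrite xconnect_sym; exact: hxz.
Qed.

End Leaf.

Section Walk.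
Variables (S S' : {set N}) (A : {set N * N}).
Hypothesis tS : tree_ok S A.
Hypothesis hS' : forall x, x \in S -> 1 < #|nb A x| -> x \in S'.

Lemma walkS' p x :
  (x \in S' \/ exists2 w, xadj A w x & w \notin x :: p) -> uniq (x :: p) ->
  path (xadj A) x p -> last x p \in S' ->
  path (xadj [set e in A | (e.1 \in S') && (e.2 \in S')]) x p /\ x \in S'.
Proof.
elim: p x => [|y p IH] x hx u pth hl; first by split; [|exact: hl].
move: pth => /= /andP[xy pth].
have xS' : x \in S'.
  case: hx => // [[w wx wn]]; apply: hS'; first by have [] := xadj_in tS xy.
  rewrite ltnNge; apply/negP => h1.
  have yn : y \in nb A x by rewrite /nb inE.
  have wn' : w \in nb A x by rewrite /nb inE xadj_sym.
  have ewy := card_le1 h1 yn wn'.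
  by move: wn; rewrite ewy !inE eqxx !orbT.
have [IH1 IH2] : path (xadj [set e in A | (e.1 \in S') && (e.2 \in S')]) y p /\ y \in S'.
  move: u; rewrite cons_uniq => /andP[xn u].
  apply: IH => //; right; exists x => //; rewrite xadj_sym; exact: xy.
split; last exact: xS'.
rewrite /= IH1 andbT.
by move: xy => /orP[h|h]; apply/orP; [left|right]; rewrite inE h /= ?xS' ?IH2.
Qed.

End Walk.

Lemma fixed_point n : forall (S : {set N}) (A : {set N * N}) (f : N -> N), #|S| <= n -> tree_ok S A -> auto_ok f S A ->
  S != finset.set0 -> exists2 x, x \in S & f x = x.
Proof.
elim: n => [|n IH] S A f hc tS af ne.
  by move: hc; rewrite leqn0 cards_eq0 (negbTE ne).
pose L := [set x in S | #|nb A x| <= 1].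
pose S' := S :\: L.
have S'S : forall x, x \in S' -> x \in S by move=> x; rewrite inE => /andP[].
have inS' : forall x, x \in S -> (x \in S') = (1 < #|nb A x|).
  by move=> x xS; rewrite !inE xS andbT ltnNge.
have fS' : forall x, x \in S -> (f x \in S') = (x \in S').
  by move=> x xS; rewrite !inS' ?(fS af) // (card_nb_auto tS af).
case: (boolP (S' == finset.set0)) => [/eqP S'0 | S'ne].
  have allleaf : forall x, x \in S -> #|nb A x| <= 1.
    move=> x xS; by rewrite leqNgt -inS' // S'0 inE.
  case/set0Pn: ne => x0 x0S.
  case: (tS) => _ hconn _.
  have := hconn _ _ x0S (fS af x0S) => /connectP [p pth hl].
  case: (boolP (nb A x0 == finset.set0)) => [/eqP nb0 | /set0Pn [y yn]].
    exists x0 => //; case: p pth hl => [|y p] /=; first by move=> _ ->.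
    by move=> /andP[hy _]; move: nb0 => /setP /(_ y); rewrite !inE hy.
  have hy0 : xadj A x0 y by move: yn; rewrite /nb inE.
  have yS : y \in S by have [] := xadj_in tS hy0.
  have nbx : forall z, xadj A x0 z -> z = y.
    move=> z hz; apply: (card_le1 (allleaf _ x0S)) => //; by rewrite /nb inE.
  have nby : forall z, xadj A y z -> z = x0.
    move=> z hz; apply: (card_le1 (allleaf _ yS)); rewrite /nb inE //.
    by rewrite xadj_sym.
  have two : forall q u, u = x0 \/ u = y -> path (xadj A) u q -> last u q = x0 \/ last u q = y.
    elim => [|v q IHq] u hu //= /andP[huv hq]; apply: IHq => //.
    by case: hu => eu; rewrite eu in huv; [right; apply: nbx | left; apply: nby].
  have := two p x0 (or_introl erefl) pth; rewrite -hl => -[fx0|fx0]; first by exists x0.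
  have fy : f y = x0.
    by apply: nby; rewrite -{1}fx0 (xadj_auto tS af x0S yS).
  exfalso; move: hy0 => /orP[h|h].
    by have := noopp tS h; rewrite /= -{1}fy -{1}fx0 (mem_auto tS af x0S yS) h.
  by have := noopp tS h; rewrite /= -{1}fx0 -{1}fy (mem_auto tS af yS x0S) h.
pose A' := [set e in A | (e.1 \in S') && (e.2 \in S')].
have tS' : tree_ok S' A'.
  split.
  - by move=> e; rewrite inE => /andP[].
  - move=> x y xS yS; case: (tS) => _ hconn _.
    have hS'' : forall x, x \in S -> 1 < #|nb A x| -> x \in S'.
      by move=> x0 x0S h; rewrite inS'.
    have := hconn _ _ (S'S _ xS) (S'S _ yS) => /connectP [p pth hy].
    case/shortenP: pth hy => p' pth' u' _ hy.
    have yS' : last x p' \in S' by rewrite -hy.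
    have [h _] := walkS' tS hS'' (or_introl xS) u' pth' yS'.
    by apply/connectP; exists p'.
  - move=> e; rewrite inE => /andP[eA _]; case: (tS) => _ _ hb.
    apply: contra (hb e eA); apply: xconnect_mono.
    by apply: finset.setSD; apply/fintype.subsetP => w; rewrite inE => /andP[].
have af' : auto_ok f S' A'.
  case: (af) => fi fI fA; split.
  - move=> x y xS yS; exact: fi (S'S _ xS) (S'S _ yS).
  - apply/setP => y; apply/imsetP/idP.
      by case=> x xS ->; rewrite (fS' _ (S'S _ xS)).
    move=> yS; have [x xS yE] := fsurj af (S'S _ yS).
    exists x; last exact: yE.
    by rewrite -(fS' _ xS) -yE.
  - apply/setP => e; apply/imsetP/idP.
      case=> a; rewrite inE => /andP[aA /andP[a1 a2]] ->.
      have [a1S a2S] := arrow_in tS aA.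
      rewrite inE /= (fS' _ a1S) (fS' _ a2S) a1 a2 !andbT -fA.
      apply/imsetP; exists a; [exact: aA | reflexivity].
    rewrite inE => /andP[eA /andP[e1 e2]]; move: eA; rewrite -{1}fA => /imsetP [a aA ea].
    have [a1S a2S] := arrow_in tS aA.
    rewrite ea /= (fS' _ a1S) in e1; rewrite ea /= (fS' _ a2S) in e2.
    exists a; last exact: ea.
    by rewrite inE aA e1 e2.
have hc' : #|S'| <= n.
  have [xl xlS xll] := leaf_exists tS ne.
  have sub : S' \subset S :\ xl.
    apply/fintype.subsetP => w wS'; rewrite in_setD1 S'S // andbT.
    by apply: contraTneq wS' => ->; rewrite inS' // -leqNgt.
  have := cardsD1 xl S; rewrite xlS add1n => hS.
  have h := subset_leq_card sub.
  rewrite -ltnS; apply: leq_trans hc; rewrite hS ltnS; exact: h.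
have [x xS' fx] := IH S' A' f hc' tS' af' S'ne.
by exists x => //; apply: S'S.
Qed.

Lemma rigid (L : Type) (S : {set N}) (A : {set N * N}) (lab : N -> L) f :
  tree_ok S A -> auto_ok f S A -> {in S, forall x, lab (f x) = lab x} ->
  (forall e e', e \in A -> e' \in A -> e != e' -> (e.1 = e'.1 \/ e.2 = e'.2) ->
     lab e.1 = lab e'.1 -> lab e.2 = lab e'.2 -> False) ->
  {in S, forall x, f x = x}.
Proof.
move=> tS af hl h2 z zS.
have ne : S != finset.set0 by apply/set0Pn; exists z.
have [x0 x0S fx0] := fixed_point (leqnn _) tS af ne.
case: (tS) => _ hconn _.
have := hconn _ _ x0S zS => /connectP [p pth ->].
elim: p x0 x0S fx0 pth => [|v p IHp] u uS fu //= /andP[huv pth].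
have vS : v \in S by have [] := xadj_in tS huv.
apply: IHp => //; apply/eqP/negP => /negP nfv.
move: huv => /orP[h|h].
  have h' : (u, f v) \in A by rewrite -{1}fu (mem_auto tS af uS vS).
  apply: (h2 _ _ h h') => //=; [|by left|by rewrite hl].
  by rewrite xpair_eqE eqxx /= eq_sym.
have h' : (f v, u) \in A by rewrite -{1}fu (mem_auto tS af vS uS).
apply: (h2 _ _ h h') => //=; [|by right|by rewrite hl].
by rewrite xpair_eqE eqxx andbT eq_sym.
Qed.

End Tree.



Section Main.
Variables (V : Type) (E : set (hedge V)) (N : finType) (r0 : ptree V N).
Hypothesis hE : higraph E.
Hypothesis hr : is_path E r0.

Local Notation V0 := (pnodes r0).
Local Notation A0 := (parrows r0).
Local Notation brk := (brkset r0).

Lemma r0_dt : directed_tree r0.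
Proof. by case: hr. Qed.

Lemma r0_E : {in V0, forall v, E (plab r0 v)}.
Proof. by case: hr. Qed.

Lemma hbrk1 b : b \in A0 -> exists K, brk b = [set K]%classic.
Proof. by case: hr => _ _ h _ /h. Qed.

Lemma h2r e e' : e \in A0 -> e' \in A0 -> e != e' -> (e.1 = e'.1 \/ e.2 = e'.2) ->
  brk e <> brk e'.
Proof. by case: hr => _ _ _ h; apply: h. Qed.

Lemma r0_bridge e : e \in A0 -> ~~ connect (xadj (A0 :\ e)) e.1 e.2.
Proof.
move=> eA; apply/negP => /connectP [p pth hl].
case/shortenP: pth hl => p' pth' u' _ hl.
case: r0_dt => _ [hin nl no _ nc].
have hne : e.1 != e.2 := nl e eA.
have eA' : (e.1, e.2) \in A0 by rewrite -surjective_pairing.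
apply: (negP (nc (e.1 :: p') _)).
  case: p' pth' u' hl => [|y [|z p'']] //=.
    by move=> _ _ h; move: hne; rewrite h eqxx.
  move=> /andP[/orP[h|h] _] _ hy; rewrite -hy in h.
    by move: h; rewrite finset.in_setD1 -surjective_pairing eqxx.
  by move: h; rewrite finset.in_setD1 => /andP[_ h]; move: (no e eA); rewrite h.
rewrite /ucycleb u' andbT /cycle rcons_path; apply/andP; split.
  apply: sub_path pth' => x y /orP[h|h]; apply/orP; [left|right];
    by move: h; rewrite finset.in_setD1 => /andP[].
by rewrite -hl /uadj eA' orbT.
Qed.

Lemma r0_tree : tree_ok V0 A0.
Proof.
case: r0_dt => _ [hin _ _ hc _]; split => //.
move=> e eA; exact: r0_bridge.
Qed.

Definition us (S : {set N}) v x :=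
  hsrc (plab r0 v) x /\ ~ (exists2 e, (e \in A0) && (e.1 \in S) & e.2 = v /\ brk e x).
Definition ut (S : {set N}) v x :=
  htgt (plab r0 v) x /\ ~ (exists2 e, (e \in A0) && (e.2 \in S) & e.1 = v /\ brk e x).
Definition Ds (S : {set N}) := forall v v' x, v \in S -> v' \in S -> us S v x -> us S v' x -> v = v'.
Definition Dt (S : {set N}) := forall v v' x, v \in S -> v' \in S -> ut S v x -> ut S v' x -> v = v'.
Definition lab (S : {set N}) : hedge V := (sub_src r0 S, sub_tgt r0 S).

Lemma us_mono (S S' : {set N}) v x : S \subset S' -> us S' v x -> us S v x.
Proof.
move=> /fintype.subsetP sS [h1 h2]; split => // -[e /andP[eA e1] h]; apply: h2.
by exists e => //; rewrite eA sS.
Qed.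

Lemma ut_mono (S S' : {set N}) v x : S \subset S' -> ut S' v x -> ut S v x.
Proof.
move=> /fintype.subsetP sS [h1 h2]; split => // -[e /andP[eA e1] h]; apply: h2.
by exists e => //; rewrite eA sS.
Qed.

Lemma ut_brk b K (P : {set N}) : b \in A0 -> brk b = [set K]%classic -> b.2 \notin P ->
  ut P b.1 K.
Proof.
move=> bA hK b2P; have bK : brk b K by rewrite hK.
split; first by case: bK.
case=> e /andP[eA e2P] [e1 he].
have [K' hK'] := hbrk1 eA.
have eK : K = K' by move: he; rewrite hK'.
apply: (h2r eA bA _ (or_introl e1)); last by rewrite hK' hK eK.
by apply/eqP => ee; move: e2P; rewrite ee (negbTE b2P).
Qed.

Lemma us_brk b K (Q : {set N}) : b \in A0 -> brk b = [set K]%classic -> b.1 \notin Q ->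
  us Q b.2 K.
Proof.
move=> bA hK b1Q; have bK : brk b K by rewrite hK.
split; first by case: bK.
case=> e /andP[eA e1Q] [e2 he].
have [K' hK'] := hbrk1 eA.
have eK : K = K' by move: he; rewrite hK'.
apply: (h2r eA bA _ (or_intror e2)); last by rewrite hK' hK eK.
by apply/eqP => ee; move: e1Q; rewrite ee (negbTE b1Q).
Qed.

Lemma disjP' (A B : set V) x : [disjoint A & B]%classic -> A x -> B x -> False.
Proof.
move/disj_set2P => h ax bx.
have : (A `&` B)%classic x by split.
by rewrite h.
Qed.

Lemma trans_use e1 e2 K : E e1 -> E e2 -> htgt e1 K -> hsrc e2 K ->
  [/\ (htgt e1 `&` hsrc e2 = [set K])%classic,
      [disjoint hsrc e1 & (hsrc e2 `\ K)]%classic,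
      [disjoint (htgt e1 `\ K) & htgt e2]%classic &
      E (hsrc e1 `|` (hsrc e2 `\ K), (htgt e1 `\ K) `|` htgt e2)%classic].
Proof.
move=> E1 E2 t1 s2; case: hE => ht _.
have ne : (htgt e1 `&` hsrc e2 !=set0)%classic by exists K.
have [K0 [h1 [h2 [h3 h4]]]] := ht _ _ E1 E2 ne.
have eK : K = K0.
  have : (htgt e1 `&` hsrc e2)%classic K by split.
  by rewrite h1.
by rewrite eK; split.
Qed.


Section Union.
Variables (P Q : {set N}) (a : N * N) (K : V).
Hypotheses (aA : a \in A0) (aP : a.1 \in P) (aQ : a.2 \in Q) (hK : brk a = [set K]%classic).
Hypothesis PQ : forall x, x \in P -> x \in Q -> False.
Hypothesis hQP : forall b, b \in A0 -> b.1 \in Q -> b.2 \in P -> False.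
Hypothesis hPQ : forall b, b \in A0 -> b.1 \in P -> b.2 \in Q -> b = a.
Hypotheses (EP : E (lab P)) (EQ : E (lab Q)).
Hypotheses (DsP : Ds P) (DtP : Dt P) (DsQ : Ds Q) (DtQ : Dt Q).

Lemma a2nP : a.2 \notin P. Proof. by apply/negP => h; apply: (PQ h aQ). Qed.
Lemma a1nQ : a.1 \notin Q. Proof. by apply/negP => h; apply: (PQ aP h). Qed.

Lemma utPa : ut P a.1 K. Proof. exact: ut_brk aA hK a2nP. Qed.
Lemma usQa : us Q a.2 K. Proof. exact: us_brk aA hK a1nQ. Qed.

Lemma KtP : sub_tgt r0 P K. Proof. by exists a.1 => //; exact: utPa. Qed.
Lemma KsQ : sub_src r0 Q K. Proof. by exists a.2 => //; exact: usQa. Qed.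

Lemma TR : [/\ (htgt (lab P) `&` hsrc (lab Q) = [set K])%classic,
      [disjoint hsrc (lab P) & (hsrc (lab Q) `\ K)]%classic,
      [disjoint (htgt (lab P) `\ K) & htgt (lab Q)]%classic &
      E (hsrc (lab P) `|` (hsrc (lab Q) `\ K), (htgt (lab P) `\ K) `|` htgt (lab Q))%classic].
Proof. exact: trans_use EP EQ KtP KsQ. Qed.

Lemma PsubU : P \subset P :|: Q. Proof. exact: finset.subsetUl. Qed.
Lemma QsubU : Q \subset P :|: Q. Proof. exact: finset.subsetUr. Qed.

Lemma vQa2 v : v \in Q -> us (P :|: Q) v K -> False.
Proof.
move=> vQ hv.
have ev : v = a.2 := DsQ vQ aQ (us_mono QsubU hv) usQa.
case: hv => _; apply; exists a; last by split => //; rewrite hK.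
by rewrite aA finset.in_setU aP.
Qed.

Lemma vPa1 v : v \in P -> ut (P :|: Q) v K -> False.
Proof.
move=> vP hv.
have ev : v = a.1 := DtP vP aP (ut_mono PsubU hv) utPa.
case: hv => _; apply; exists a; last by split => //; rewrite hK.
by rewrite aA finset.in_setU aQ orbT.
Qed.

Lemma union_src : sub_src r0 (P :|: Q) = (sub_src r0 P `|` (sub_src r0 Q `\ K))%classic.
Proof.
apply/seteqP; split => x /=.
  case=> v; rewrite finset.in_setU => /orP[vP|vQ] hv.
    by left; exists v => //; apply: us_mono PsubU hv.
  right; split; first by exists v => //; apply: us_mono QsubU hv.
  by move=> xK; rewrite xK in hv; apply: vQa2 vQ hv.
case=> [[v vP [sv nr]]|[[v vQ [sv nr]] xK]].
  exists v; first by rewrite finset.in_setU vP.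
  split => // -[e /andP[eA]]; rewrite finset.in_setU => /orP[e1|e1] [e2 be].
    by apply: nr; exists e => //; rewrite eA e1.
  by apply: (hQP eA e1); rewrite e2.
exists v; first by rewrite finset.in_setU vQ orbT.
split => // -[e /andP[eA]]; rewrite finset.in_setU => /orP[e1|e1] [e2 be].
  have ea : e = a by apply: hPQ => //; rewrite e2.
  by apply: xK; move: be; rewrite ea hK.
by apply: nr; exists e => //; rewrite eA e1.
Qed.

Lemma union_tgt : sub_tgt r0 (P :|: Q) = ((sub_tgt r0 P `\ K) `|` sub_tgt r0 Q)%classic.
Proof.
apply/seteqP; split => x /=.
  case=> v; rewrite finset.in_setU => /orP[vP|vQ] hv.
    left; split; first by exists v => //; apply: ut_mono PsubU hv.
    by move=> xK; rewrite xK in hv; apply: vPa1 vP hv.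
  by right; exists v => //; apply: ut_mono QsubU hv.
case=> [[[v vP [sv nr]] xK]|[v vQ [sv nr]]].
  exists v; first by rewrite finset.in_setU vP.
  split => // -[e /andP[eA]]; rewrite finset.in_setU => /orP[e2|e2] [e1 be].
    by apply: nr; exists e => //; rewrite eA e2.
  have ea : e = a by apply: hPQ => //; rewrite e1.
  by apply: xK; move: be; rewrite ea hK.
exists v; first by rewrite finset.in_setU vQ orbT.
split => // -[e /andP[eA]]; rewrite finset.in_setU => /orP[e2|e2] [e1 be].
  by apply: (hQP eA) => //; rewrite e1.
by apply: nr; exists e => //; rewrite eA e2.
Qed.

Lemma union_E : E (lab (P :|: Q)).
Proof. by rewrite /lab union_src union_tgt; case: TR. Qed.

Lemma cross_s v v' x : v \in P -> v' \in Q -> us (P :|: Q) v x -> us (P :|: Q) v' x -> False.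
Proof.
move=> vP v'Q hv hv'.
have xP : sub_src r0 P x by exists v => //; apply: us_mono PsubU hv.
have xQ : sub_src r0 Q x by exists v' => //; apply: us_mono QsubU hv'.
case: TR => _ dj _ _.
have [xK|xK] := pselect (x = K).
  by rewrite xK in hv'; apply: vQa2 v'Q hv'.
by apply: (disjP' dj xP).
Qed.

Lemma cross_t v v' x : v \in P -> v' \in Q -> ut (P :|: Q) v x -> ut (P :|: Q) v' x -> False.
Proof.
move=> vP v'Q hv hv'.
have xP : sub_tgt r0 P x by exists v => //; apply: ut_mono PsubU hv.
have xQ : sub_tgt r0 Q x by exists v' => //; apply: ut_mono QsubU hv'.
case: TR => _ _ dj _.
have [xK|xK] := pselect (x = K).
  by rewrite xK in hv; apply: vPa1 vP hv.
by apply: (disjP' dj _ xQ).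
Qed.

Lemma union_Ds : Ds (P :|: Q).
Proof.
move=> v v' x; rewrite !finset.in_setU => /orP[vP|vQ] /orP[v'P|v'Q] hv hv'.
- exact: DsP vP v'P (us_mono PsubU hv) (us_mono PsubU hv').
- by case: (cross_s vP v'Q hv hv').
- by case: (cross_s v'P vQ hv' hv).
- exact: DsQ vQ v'Q (us_mono QsubU hv) (us_mono QsubU hv').
Qed.

Lemma union_Dt : Dt (P :|: Q).
Proof.
move=> v v' x; rewrite !finset.in_setU => /orP[vP|vQ] /orP[v'P|v'Q] hv hv'.
- exact: DtP vP v'P (ut_mono PsubU hv) (ut_mono PsubU hv').
- by case: (cross_t vP v'Q hv hv').
- by case: (cross_t v'P vQ hv' hv).
- exact: DtQ vQ v'Q (ut_mono QsubU hv) (ut_mono QsubU hv').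
Qed.

End Union.

Lemma union_all (P Q : {set N}) a K : a \in A0 -> a.1 \in P -> a.2 \in Q ->
  brk a = [set K]%classic ->
  (forall x, x \in P -> x \in Q -> False) ->
  (forall b, b \in A0 -> b.1 \in Q -> b.2 \in P -> False) ->
  (forall b, b \in A0 -> b.1 \in P -> b.2 \in Q -> b = a) ->
  E (lab P) -> E (lab Q) -> Ds P -> Dt P -> Ds Q -> Dt Q ->
  [/\ (htgt (lab P) `&` hsrc (lab Q) = [set K])%classic,
      sub_src r0 (P :|: Q) = (sub_src r0 P `|` (sub_src r0 Q `\ K))%classic,
      sub_tgt r0 (P :|: Q) = ((sub_tgt r0 P `\ K) `|` sub_tgt r0 Q)%classic,
      E (lab (P :|: Q)) &
      Ds (P :|: Q) /\ Dt (P :|: Q)].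
Proof.
move=> aA aP aQ hK PQ hQP hPQ EP EQ DsP DtP DsQ DtQ; split.
- by case: (TR aA aP aQ hK PQ EP EQ).
- exact: (union_src aA aP aQ hK PQ hQP hPQ DsQ).
- exact: (union_tgt aA aP aQ hK PQ hQP hPQ DtP).
- exact: (union_E aA aP aQ hK PQ hQP hPQ EP EQ DtP DsQ).
- split; [exact: (union_Ds aA aP aQ hK PQ EP EQ DsP DsQ) | exact: (union_Dt aA aP aQ hK PQ EP EQ DtP DtQ)].
Qed.

End Main.



Section GlueSub.
Variables (V : Type) (N : finType) (T : ptree V N) (u w : N) (K : V).
Hypothesis uw : u != w.
Hypothesis eT : (u, w) \in parrows T.
Hypothesis only : forall e, e \in parrows T -> e.1 \in [set u; w]%SET -> e.2 \in [set u; w]%SET -> e = (u, w).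
Hypothesis hK : brkset T (u, w) = [set K]%classic.

Lemma glue_src : sub_src T [set u; w]%SET =
  (hsrc (plab T u) `|` (hsrc (plab T w) `\ K))%classic.
Proof.
have uin : u \in [set u; w]%SET by rewrite !inE eqxx.
have win : w \in [set u; w]%SET by rewrite !inE eqxx orbT.
apply/seteqP; split => x /=.
  case=> v; rewrite !inE => /orP[]/eqP -> [sv nr]; first by left.
  right; split => // xK; apply: nr; exists (u, w); first by rewrite eT uin.
  by split => //; rewrite hK xK.
case=> [sx|[sx xK]].
  exists u => //; split => // -[e /andP[eA e1] [e2 be]].
  have ee : e = (u, w) by apply: only => //; rewrite e2.
  by move: uw; rewrite -e2 ee eqxx.
exists w => //; split => // -[e /andP[eA e1] [e2 be]].
have ee : e = (u, w) by apply: only => //; rewrite e2.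
by apply: xK; move: be; rewrite ee hK.
Qed.

Lemma glue_tgt : sub_tgt T [set u; w]%SET =
  ((htgt (plab T u) `\ K) `|` htgt (plab T w))%classic.
Proof.
have uin : u \in [set u; w]%SET by rewrite !inE eqxx.
have win : w \in [set u; w]%SET by rewrite !inE eqxx orbT.
apply/seteqP; split => x /=.
  case=> v; rewrite !inE => /orP[]/eqP -> [sv nr]; last by right.
  left; split => // xK; apply: nr; exists (u, w); first by rewrite eT win.
  by split => //; rewrite hK xK.
case=> [[sx xK]|sx].
  exists u => //; split => // -[e /andP[eA e2] [e1 be]].
  have ee : e = (u, w) by apply: only => //; rewrite e1.
  by apply: xK; move: be; rewrite ee hK.
exists w => //; split => // -[e /andP[eA e2] [e1 be]].
have ee : e = (u, w) by apply: only => //; rewrite e1.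
by move: uw; rewrite -e1 ee eqxx.
Qed.

End GlueSub.

Section State.
Variables (V : Type) (E : set (hedge V)) (N : finType) (r0 : ptree V N).
Hypothesis hE : higraph E.
Hypothesis hr : is_path E r0.

Local Notation V0 := (pnodes r0).
Local Notation A0 := (parrows r0).
Local Notation brk := (brkset r0).

Definition cls (rho : N -> N) y : {set N} := [set x in V0 | rho x == y].
Definition mlab rho y := lab r0 (cls rho y).

Definition Inv (rho : N -> N) (X : {set N * N}) :=
 [/\ X \subset A0,
     {in V0, forall x, rho x \in V0},
     {in V0, forall x, connect (xadj X) x (rho x)},
     {in X, forall b, rho b.1 = rho b.2} &
     {in V0, forall x, rho (rho x) = rho x} /\
     {in V0, forall y, rho y = y ->
        [/\ E (mlab rho y), Ds r0 (cls rho y) & Dt r0 (cls rho y)]}].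

Definition Match (T : ptree V N) rho X :=
 [/\ pnodes T = [set x in V0 | rho x == x],
     parrows T = ([set (rho a.1, rho a.2) | a in A0 :\: X]%SET) &
     {in pnodes T, forall y, plab T y = mlab rho y}].

Definition upd (rho : N -> N) (b : N * N) :=
  fun x => if rho x == rho b.2 then rho b.1 else rho x.

Lemma arrowV0 b : b \in A0 -> b.1 \in V0 /\ b.2 \in V0.
Proof. move=> bA; exact: (arrow_in (r0_tree hr) bA). Qed.

Lemma bridge_sub a (Y : {set N * N}) : a \in A0 -> Y \subset A0 :\ a ->
  ~ connect (xadj Y) a.1 a.2.
Proof.
move=> aA sY h; move: (r0_bridge hr aA) => /negP; apply.
exact: xconnect_mono sY h.
Qed.

Lemma clsP (rho : N -> N) y x : (x \in cls rho y) = (x \in V0) && (rho x == y).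
Proof. by rewrite inE. Qed.

Section InvFacts.
Variables (rho : N -> N) (X : {set N * N}).
Hypothesis I : Inv rho X.

Lemma conn_rho x y : connect (xadj X) x y -> rho x = rho y.
Proof.
case: I => _ _ _ hX _.
case/connectP => p pth ->; elim: p x pth => [|z p IH] x //= /andP[hxz pth].
rewrite -IH //; case/orP: hxz => h; first exact: hX h.
by rewrite (hX _ h).
Qed.

Lemma rho_conn x y : x \in V0 -> y \in V0 -> rho x = rho y -> connect (xadj X) x y.
Proof.
case: I => _ _ hc _ _ xV yV e.
apply: connect_trans (hc _ xV) _; rewrite e xconnect_sym; exact: hc.
Qed.

Lemma XA0 : X \subset A0. Proof. by case: I. Qed.

Lemma rhoV x : x \in V0 -> rho x \in V0. Proof. by case: I => _ h _ _ _; apply: h. Qed.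
Lemma rhoI x : x \in V0 -> rho (rho x) = rho x. Proof. by case: I => _ _ _ _ [h _]; apply: h. Qed.

Lemma subXD a : a \in A0 -> a \notin X -> X \subset A0 :\ a.
Proof.
move=> aA aX; apply/fintype.subsetP => b bX; rewrite finset.in_setD1 (fintype.subsetP XA0 _ bX) andbT.
by apply: contraNneq aX => <-.
Qed.

Lemma D2 b : b \in A0 -> b \notin X -> rho b.1 != rho b.2.
Proof.
move=> bA bX; apply/eqP => e; have [b1 b2] := arrowV0 bA.
apply: (bridge_sub bA (subXD bA bX)); exact: rho_conn.
Qed.

Lemma subYD a b : a \in A0 -> a \notin X -> b \in A0 -> b != a ->
  b |: X \subset A0 :\ a.
Proof.
move=> aA aX bA ba; apply/fintype.subsetP => c; rewrite finset.in_setU1 => /orP[/eqP ->|cX].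
  by rewrite finset.in_setD1 ba.
exact: (fintype.subsetP (subXD aA aX)).
Qed.

Lemma XsubY b : X \subset b |: X. Proof. exact: finset.subsetU1. Qed.

Lemma D3 a b : a \in A0 -> a \notin X -> b \in A0 -> b \notin X ->
  rho a.1 = rho b.1 -> rho a.2 = rho b.2 -> a = b.
Proof.
move=> aA aX bA bX e1 e2; apply/eqP/negP => /negP ab.
have [a1 a2] := arrowV0 aA; have [b1 b2] := arrowV0 bA.
apply: (bridge_sub aA (subYD aA aX bA _)); first by rewrite eq_sym.
apply: connect_trans (xconnect_mono (XsubY b) (rho_conn a1 b1 e1)) _.
apply: connect_trans (connect1 (_ : xadj (b |: X) b.1 b.2)) _.
  by rewrite /xadj finset.in_setU1 -surjective_pairing eqxx.
apply: (xconnect_mono (XsubY b)); exact: rho_conn.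
Qed.

Lemma D4 a b : a \in A0 -> a \notin X -> b \in A0 -> b \notin X ->
  rho a.1 = rho b.2 -> rho a.2 = rho b.1 -> False.
Proof.
move=> aA aX bA bX e1 e2.
have [ab|ab] := eqVneq b a.
  by subst b; move: (D2 aA aX); rewrite e1 eqxx.
have [a1 a2] := arrowV0 aA; have [b1 b2] := arrowV0 bA.
apply: (bridge_sub aA (subYD aA aX bA ab)).
apply: connect_trans (xconnect_mono (XsubY b) (rho_conn a1 b2 e1)) _.
apply: connect_trans (connect1 (_ : xadj (b |: X) b.2 b.1)) _.
  by rewrite /xadj !finset.in_setU1 -surjective_pairing eqxx !orbT.
apply: (xconnect_mono (XsubY b)); exact: rho_conn.
Qed.


Lemma cls_hyps a K : a \in A0 -> a \notin X -> brk a = [set K]%classic ->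
  let P := cls rho (rho a.1) in let Q := cls rho (rho a.2) in
  [/\ a.1 \in P /\ a.2 \in Q,
      (forall x, x \in P -> x \in Q -> False),
      (forall b, b \in A0 -> b.1 \in Q -> b.2 \in P -> False),
      (forall b, b \in A0 -> b.1 \in P -> b.2 \in Q -> b = a) &
      [/\ E (lab r0 P) /\ E (lab r0 Q), Ds r0 P, Dt r0 P, Ds r0 Q & Dt r0 Q]].
Proof.
move=> aA aX hK P Q; have [a1 a2] := arrowV0 aA.
have uw := D2 aA aX.
have bnX : forall b, b \in A0 -> rho b.1 != rho b.2 -> b \notin X.
  move=> b bA; apply: contra => bX; apply/eqP; case: I => _ _ _ h _; exact: h.
split.
- by rewrite !clsP a1 a2 !eqxx.
- move=> x; rewrite !clsP => /andP[_ /eqP ->] /andP[_ /eqP h]; by move: uw; rewrite h eqxx.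
- move=> b bA; rewrite !clsP => /andP[_ /eqP h1] /andP[_ /eqP h2].
  apply: (D4 aA aX bA) => //; apply: bnX => //; by rewrite h1 h2 eq_sym.
- move=> b bA; rewrite !clsP => /andP[_ /eqP h1] /andP[_ /eqP h2].
  by apply/esym; apply: (D3 aA aX bA) => //; apply: bnX => //; rewrite h1 h2.
- case: I => _ _ _ _ [_ hc].
  have [E1 Ds1 Dt1] := hc _ (rhoV a1) (rhoI a1).
  have [E2 Ds2 Dt2] := hc _ (rhoV a2) (rhoI a2).
  by split.
Qed.


Section Step.
Variables (a : N * N).
Hypotheses (aA : a \in A0) (aX : a \notin X).
Local Notation u := (rho a.1).
Local Notation w := (rho a.2).
Local Notation rho' := (upd rho a).

Lemma a1V : a.1 \in V0. Proof. by have [] := arrowV0 aA. Qed.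
Lemma a2V : a.2 \in V0. Proof. by have [] := arrowV0 aA. Qed.
Lemma uV : u \in V0. Proof. exact: rhoV a1V. Qed.
Lemma ruu : rho u = u. Proof. exact: rhoI a1V. Qed.
Lemma rww : rho w = w. Proof. exact: rhoI a2V. Qed.
Lemma uw : u != w. Proof. exact: D2 aA aX. Qed.

Lemma clsU : cls rho' u = cls rho u :|: cls rho w.
Proof.
apply/setP => x; rewrite finset.in_setU !clsP /upd.
case: (x \in V0) => //=.
have [hw|hw] := eqVneq (rho x) w.
  by rewrite hw !eqxx orbT.
by rewrite orbF.
Qed.

Lemma clsO y : y != u -> y != w -> cls rho' y = cls rho y.
Proof.
move=> yu yw; apply/setP => x; rewrite !clsP /upd.
have [hw|hw] := eqVneq (rho x) w.
  by rewrite hw (eq_sym u) (negbTE yu) (eq_sym w) (negbTE yw).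
by [].
Qed.

Lemma the_K : exists K, brk a = [set K]%classic.
Proof. have h := hbrk1 hr aA. exact: h. Qed.

Lemma union_here K : brk a = [set K]%classic ->
  [/\ (htgt (lab r0 (cls rho u)) `&` hsrc (lab r0 (cls rho w)) = [set K])%classic,
      sub_src r0 (cls rho u :|: cls rho w) =
        (sub_src r0 (cls rho u) `|` (sub_src r0 (cls rho w) `\ K))%classic,
      sub_tgt r0 (cls rho u :|: cls rho w) =
        ((sub_tgt r0 (cls rho u) `\ K) `|` sub_tgt r0 (cls rho w))%classic,
      E (lab r0 (cls rho u :|: cls rho w)) &
      Ds r0 (cls rho u :|: cls rho w) /\ Dt r0 (cls rho u :|: cls rho w)].
Proof.
move=> hK.
have [[aP aQ] PQ hQP hPQ [[EP EQ] DsP DtP DsQ DtQ]] := cls_hyps aA aX hK.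
exact: (union_all hE hr aA aP aQ hK PQ hQP hPQ EP EQ DsP DtP DsQ DtQ).
Qed.

Lemma inv_step : Inv rho' (a |: X).
Proof.
have [K hK] := the_K.
have [_ _ _ EU [DsU DtU]] := union_here hK.
case: (I) => hXA hV hc hX [hI hcl].
split.
- apply/fintype.subsetP => b; rewrite finset.in_setU1 => /orP[/eqP ->|bX] //.
  exact: (fintype.subsetP hXA).
- by move=> x xV; rewrite /upd; case: ifP => _; [exact: uV | exact: rhoV].
- move=> x xV; rewrite /upd; case: ifP => [/eqP hw|_]; last first.
    exact: xconnect_mono (XsubY a) (hc x xV).
  apply: connect_trans (xconnect_mono (XsubY a) (hc x xV)) _.
  rewrite hw.
  have h1 : connect (xadj X) w a.2 by rewrite xconnect_sym; exact: hc a2V.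
  apply: connect_trans (xconnect_mono (XsubY a) h1) _.
  have h2 : xadj (a |: X) a.2 a.1.
    by rewrite /xadj !finset.in_setU1 -surjective_pairing eqxx !orbT.
  apply: connect_trans (connect1 h2) _.
  exact: xconnect_mono (XsubY a) (hc _ a1V).
- move=> b; rewrite finset.in_setU1 => /orP[/eqP ->|bX].
    by rewrite /upd (negbTE uw) eqxx.
  by rewrite /upd (hX b bX).
split.
- move=> x xV; rewrite /upd.
  have [hw|hw] := eqVneq (rho x) w.
    by rewrite ruu (negbTE uw).
  by rewrite (rhoI xV) (negbTE hw).
move=> y yV hy.
have [yu|yu] := eqVneq y u.
  by rewrite yu /mlab clsU; split.
have hw : rho y != w.
  apply/negP => /eqP hw; move: hy; rewrite /upd hw eqxx => hy.
  by move: yu; rewrite hy eqxx.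
have ry : rho y = y by move: hy; rewrite /upd (negbTE hw).
have yw : y != w by rewrite -ry.
rewrite /mlab clsO //; apply: hcl => //.
Qed.

Lemma only_uw T : Match T rho X -> forall e, e \in parrows T ->
  e.1 \in [set u; w]%SET -> e.2 \in [set u; w]%SET -> e = (u, w).
Proof.
case=> _ hA _ e; rewrite hA => /imsetP [b]; rewrite finset.in_setD => /andP[bX bA] -> /=.
have hbw := D2 bA bX.
rewrite !inE => /orP[]/eqP h1 /orP[]/eqP h2.
- by move: hbw; rewrite h1 h2 eqxx.
- by rewrite (D3 aA aX bA bX (esym h1) (esym h2)).
- by case: (D4 aA aX bA bX (esym h2) (esym h1)).
- by move: hbw; rewrite h1 h2 eqxx.
Qed.

Lemma match_step T : Match T rho X -> Match (glue T (u, w)) rho' (a |: X).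
Proof.
move=> M; have M' := M; case: M' => hN hA hL.
have [K hK] := the_K.
have [hKT hsrc htgt _ _] := union_here hK.
have uT : u \in pnodes T by rewrite hN inE uV ruu eqxx.
have wT : w \in pnodes T by rewrite hN inE (rhoV a2V) rww eqxx.
split.
- rewrite /glue /= hN; apply/setP => x; rewrite finset.in_setD1 !inE /upd.
  have [xw|xw] := eqVneq x w.
    by rewrite xw rww eqxx /= (negbTE uw) andbF.
  rewrite /=; case xV: (x \in V0) => //=.
  have [hw|hw] := eqVneq (rho x) w; last by [].
  rewrite hw eq_sym (negbTE xw); apply/esym/negbTE; apply/eqP => ux.
  by move: uw; rewrite -hw -ux ruu eqxx.
- rewrite /glue /=; apply/setP => z; apply/imsetP/imsetP.
    case=> c; rewrite finset.in_setD1 => /andP[ce]; rewrite hA => /imsetP [b].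
    rewrite finset.in_setD => /andP[bX bA] cb ->.
    exists b; last by rewrite cb.
    rewrite finset.in_setD finset.in_setU1 bA andbT negb_or bX andbT.
    by apply: contraNneq ce => ba; rewrite cb ba.
  case=> b; rewrite finset.in_setD finset.in_setU1 negb_or => /andP[/andP[ba bX] bA] ->.
  exists (rho b.1, rho b.2) => //.
  rewrite finset.in_setD1 hA; apply/andP; split; last first.
    by apply/imsetP; exists b => //; rewrite finset.in_setD bX bA.
  apply/negP => /eqP [h1 h2]; move: ba; rewrite (D3 aA aX bA bX (esym h1) (esym h2)).
  by rewrite eqxx.
- move=> y; rewrite /glue /= finset.in_setD1 => /andP[yw yT].
  have [yu|yu] := eqVneq y u.
    rewrite yu /mlab clsU.
    have hKT' : brkset T (u, w) = [set K]%classic.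
      by rewrite /brkset /= (hL _ uT) (hL _ wT).
    have eT : (u, w) \in parrows T by rewrite hA; apply/imsetP; exists a => //; rewrite finset.in_setD aX aA.
    rewrite (glue_src uw eT (only_uw M) hKT') (glue_tgt uw eT (only_uw M) hKT').
    by rewrite (hL _ uT) (hL _ wT) /lab /= hsrc htgt.
  rewrite (hL _ yT) /mlab clsO //.
Qed.

End Step.

End InvFacts.

End State.



Section Run.
Variables (V : Type) (E : set (hedge V)) (N : finType) (r0 : ptree V N).
Hypothesis hE : higraph E.
Hypothesis hr : is_path E r0.

Local Notation V0 := (pnodes r0).
Local Notation A0 := (parrows r0).
Local Notation brk := (brkset r0).
Local Notation Inv := (Inv E r0).
Local Notation Match := (Match r0).
Local Notation cls := (cls r0).
Local Notation mlab := (mlab r0).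

Lemma cls_id y : y \in V0 -> cls id y = [set y]%SET.
Proof. by move=> yV; apply/setP => x; rewrite clsP !inE; have [->|nxy] := eqVneq x y; rewrite ?yV ?andbF. Qed.

Lemma lab_single y : y \in V0 -> mlab id y = plab r0 y.
Proof.
move=> yV; rewrite /mlab cls_id // /lab [plab r0 y]surjective_pairing.
have nl : forall e, e \in A0 -> e.1 \in [set y]%SET -> e.2 = y -> False.
  move=> e eA; rewrite !inE => /eqP h1 h2.
  by move: (noloop (r0_tree hr) eA); rewrite h1 h2 eqxx.
congr pair; apply/seteqP; split => x /=.
- by case=> v; rewrite !inE => /eqP -> [].
- by move=> h; exists y; rewrite ?inE //; split => // -[e /andP[eA e1] [e2 _]]; apply: nl eA e1 e2.
- by case=> v; rewrite !inE => /eqP -> [].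
- by move=> h; exists y; rewrite ?inE //; split => // -[e /andP[eA e2] [e1 _]]; apply: (nl e eA); [by rewrite e1 inE | by apply/eqP; move: e2; rewrite inE].
Qed.

Lemma inv0 : Inv id finset.set0.
Proof.
split.
- exact: finset.sub0set.
- by [].
- by move=> x _; exact: connect0.
- by move=> b; rewrite inE.
split => // y yV _.
rewrite lab_single //; split; first by have h := r0_E hr; apply: h.
- by move=> v v' x; rewrite cls_id // !inE => /eqP -> /eqP ->.
- by move=> v v' x; rewrite cls_id // !inE => /eqP -> /eqP ->.
Qed.

Lemma match0 : Match r0 id finset.set0.
Proof.
split.
- by apply/setP => x; rewrite !inE eqxx andbT.
- apply/setP => z; rewrite finset.setD0; apply/idP/imsetP.
    by move=> zA; exists z => //; rewrite -surjective_pairing.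
  by case=> b bA ->; rewrite -surjective_pairing.
- by move=> y yV; rewrite lab_single.
Qed.

Fixpoint Phi (rho : N -> N) (s : seq (N * N)) : seq (N * N) :=
  if s is b :: s' then (rho b.1, rho b.2) :: Phi (upd rho b) s' else [::].

Fixpoint Rend (rho : N -> N) (s : seq (N * N)) : N -> N :=
  if s is b :: s' then Rend (upd rho b) s' else rho.

Definition valid (X : {set N * N}) (s : seq (N * N)) :=
  uniq s && all (fun b => (b \in A0) && (b \notin X)) s.

Lemma size_Phi rho s : size (Phi rho s) = size s.
Proof. by elim: s rho => //= b s IH rho; rewrite IH. Qed.

Lemma valid_cons X b s : valid X (b :: s) ->
  [/\ b \in A0, b \notin X & valid (b |: X) s].
Proof.
rewrite /valid /= => /andP[/andP[bs us] /andP[/andP[bA bX] als]]; split => //.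
rewrite us /=; apply/allP => c cs; move/allP: als => /(_ c cs) /andP[-> cX].
rewrite finset.in_setU1 negb_or cX andbT.
by apply: contraNneq bs => <-.
Qed.

Lemma run s : forall rho X T, Inv rho X -> Match T rho X -> valid X s ->
  [/\ is_glue_seq T (Phi rho s), Inv (Rend rho s) (X :|: [set b in s]%SET) &
      Match (glue_end T (Phi rho s)) (Rend rho s) (X :|: [set b in s]%SET)].
Proof.
elim: s => [|b s IH] rho X T I M vs.
  by rewrite (_ : X :|: _ = X) //; apply/setP => x; rewrite !inE orbF.
have [bA bX vs'] := valid_cons vs.
have I' := inv_step hE hr I bA bX.
have M' := match_step hE hr I bA bX M.
have [g1 g2 g3] := IH _ _ _ I' M' vs'.
have eX : (b |: X) :|: [set x in s]%SET = X :|: [set x in b :: s]%SET.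
  by apply/setP => x; rewrite !inE orbA (orbC (x == b)).
rewrite -eX; split => //=; split => //.
case: M => _ hA _; rewrite hA; apply/imsetP; exists b => //.
by rewrite finset.in_setD bX bA.
Qed.

Lemma surj s' : forall rho X T, Inv rho X -> Match T rho X -> is_glue_seq T s' ->
  exists2 s, valid X s & Phi rho s = s'.
Proof.
elim: s' => [|e s' IH] rho X T I M /=; first by exists [::].
case=> eT hs.
have M0 := M; case: M0 => _ hA _.
move: eT; rewrite hA => /imsetP [b]; rewrite finset.in_setD => /andP[bX bA] eb.
have I' := inv_step hE hr I bA bX.
have M' := match_step hE hr I bA bX M.
rewrite eb in hs.
have [s vs hPhi] := IH _ _ _ I' M' hs.
exists (b :: s); last by rewrite /= hPhi eb.
move: vs; rewrite /valid /= => /andP[us als]; rewrite us bA bX /= andbT.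
apply/andP; split.
  apply/negP => bs; move/allP: als => /(_ b bs); rewrite finset.in_setU1 eqxx.
  by rewrite andbF.
apply/allP => c cs; move/allP: als => /(_ c cs) /andP[-> ].
by rewrite finset.in_setU1 negb_or => /andP[_ ->].
Qed.

Lemma inj s : forall t rho X, Inv rho X -> valid X s -> valid X t -> Phi rho s = Phi rho t -> s = t.
Proof.
elim: s => [|b s IH] [|c t] rho X I //= vs vt.
case=> h1 h2 hP.
have [bA bX vs'] := valid_cons vs.
have [cA cX vt'] := valid_cons vt.
have ebc := D3 hr I bA bX cA cX h1 h2.
rewrite -ebc in vt' hP *; congr cons.
exact: IH _ _ _ (inv_step hE hr I bA bX) vs' vt' hP.
Qed.

End Run.



Section Rig.
Variables (V : Type) (E : set (hedge V)) (N : finType) (r0 : ptree V N).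
Hypothesis hE : higraph E.
Hypothesis hr : is_path E r0.

Local Notation V0 := (pnodes r0).
Local Notation A0 := (parrows r0).
Local Notation brk := (brkset r0).
Local Notation Inv := (Inv E r0).
Local Notation Match := (Match r0).
Local Notation cls := (cls r0).
Local Notation mlab := (mlab r0).

Variables (rho : N -> N) (X : {set N * N}) (T : ptree V N).
Hypotheses (I : Inv rho X) (M : Match T rho X).

Lemma arrT c : c \in parrows T -> exists2 b, (b \in A0) && (b \notin X) & c = (rho b.1, rho b.2).
Proof.
case: M => _ hA _; rewrite hA => /imsetP [b]; rewrite finset.in_setD => /andP[bX bA] ->.
by exists b; rewrite ?bA.
Qed.

Lemma rho_pT x : x \in V0 -> rho x \in pnodes T.
Proof. by case: M => hN _ _ xV; rewrite hN inE (rhoV I xV) (rhoI I xV) eqxx. Qed.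

Lemma pT x : x \in pnodes T -> x \in V0 /\ rho x = x.
Proof. by case: M => hN _ _; rewrite hN inE => /andP[-> /eqP]. Qed.

Lemma T_tree : tree_ok (pnodes T) (parrows T).
Proof.
have M0 := M; case: M0 => hN hA hL.
split.
- move=> c /arrT [b /andP[bA bX] ->] /=.
  by have [b1 b2] := arrowV0 hr bA; rewrite !rho_pT.
- move=> x y /pT [xV rx] /pT [yV ry].
  have := r0_dt hr => -[_ [_ _ _ hc _]].
  have := hc x y xV yV => /connectP [p pth hy].
  have key : forall u v, uadj r0 u v -> connect (xadj (parrows T)) (rho u) (rho v).
    move=> u v huv.
    have step : forall u v, (u, v) \in A0 -> connect (xadj (parrows T)) (rho u) (rho v).
      move=> u' v' h.
      have [hX|hX] := boolP ((u', v') \in X).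
        case: I => _ _ _ h4 _; rewrite (h4 _ hX); exact: connect0.
      apply: connect1; apply/orP; left; rewrite hA; apply/imsetP.
      by exists (u', v') => //; rewrite finset.in_setD hX h.
    case/orP: huv => h; first exact: step.
    by rewrite xconnect_sym; apply: step.
  have gen : forall q z, path (uadj r0) z q -> connect (xadj (parrows T)) (rho z) (rho (last z q)).
    elim => [|z' q IHq] z /=; first by move=> _; exact: connect0.
    by case/andP => hz hq; apply: connect_trans (key _ _ hz) (IHq _ hq).
  rewrite -rx -ry hy; exact: gen.
- move=> c cT; apply/negP => hc.
  have [a /andP[aA aX] ca] := arrT cT.
  have sXa := subXD I aA aX.
  have key : forall u v, xadj (parrows T :\ c) u v -> connect (xadj (A0 :\ a)) u v.
    have step : forall d, d \in parrows T -> d != c -> connect (xadj (A0 :\ a)) d.1 d.2.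
      move=> d dT dc; have [b /andP[bA bX] db] := arrT dT.
      have ba : b != a by apply: contraNneq dc => eba; rewrite db ca eba.
      have sY := subYD I aA aX bA ba.
      have [b1 b2] := arrowV0 hr bA.
      rewrite db /=; apply: (xconnect_mono sY).
      apply: connect_trans (_ : connect (xadj (b |: X)) (rho b.1) b.1) _.
        by apply: xconnect_mono (XsubY X b) _; rewrite xconnect_sym; case: I => _ _ hc' _ _; apply: hc'.
      apply: connect_trans (connect1 (_ : xadj (b |: X) b.1 b.2)) _.
        by rewrite /xadj !finset.in_setU1 -surjective_pairing eqxx.
      by apply: xconnect_mono (XsubY X b) _; case: I => _ _ hc' _ _; apply: hc'.
    move=> u v /orP[h|h]; move: h; rewrite finset.in_setD1 => /andP[ne h].
      exact: (step (u, v)).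
    by rewrite xconnect_sym; apply: (step (v, u)).
  have h1 : connect (xadj (A0 :\ a)) c.1 c.2 by apply: connect_sub hc; exact: key.
  have [a1 a2] := arrowV0 hr aA.
  apply: (bridge_sub hr aA (fintype.subxx _)).
  apply: connect_trans (xconnect_mono sXa (_ : connect (xadj X) a.1 (rho a.1))) _.
    by case: I => _ _ hc' _ _; apply: hc'.
  rewrite ca /= in h1; apply: connect_trans h1 _.
  apply: xconnect_mono sXa _; rewrite xconnect_sym; by case: I => _ _ hc' _ _; apply: hc'.
Qed.


Lemma brkT b : b \in A0 -> b \notin X -> brkset T (rho b.1, rho b.2) = brk b.
Proof.
move=> bA bX; have [K hK] := hbrk1 hr bA.
have [hKT _ _ _ _] := union_here hE hr I bA bX hK.
have [b1 b2] := arrowV0 hr bA.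
case: M => _ _ hL.
by rewrite hK /brkset /= (hL _ (rho_pT b1)) (hL _ (rho_pT b2)).

Qed.

Lemma T_h2 e e' : e \in parrows T -> e' \in parrows T -> e != e' ->
  (e.1 = e'.1 \/ e.2 = e'.2) -> plab T e.1 = plab T e'.1 -> plab T e.2 = plab T e'.2 -> False.
Proof.
move=> eT e'T ne hsh l1 l2.
have [b /andP[bA bX] eb] := arrT eT; have [b' /andP[b'A b'X] e'b] := arrT e'T.
have hb : brk b = brk b'.
  by rewrite -(brkT bA bX) -(brkT b'A b'X) -eb -e'b /brkset l1 l2.
have [K hK] := hbrk1 hr bA.
have hK' : brk b' = [set K]%classic by rewrite -hb.
have bb' : b != b' by apply: contraNneq ne => ebb; rewrite eb e'b ebb.
have [b1 b2] := arrowV0 hr bA; have [b'1 b'2] := arrowV0 hr b'A.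
case: (I) => _ _ _ _ [_ hcl].
case: hsh => [h1|h2].
  rewrite eb e'b /= in h1.
  have [_ _ Dt1] := hcl _ (rhoV I b1) (rhoI I b1).
  have utb : ut r0 (cls rho (rho b.1)) b.1 K.
    apply: (ut_brk hr bA hK); rewrite clsP negb_and eq_sym (D2 hr I bA bX) orbT //.
  have utb' : ut r0 (cls rho (rho b.1)) b'.1 K.
    apply: (ut_brk hr b'A hK'); rewrite clsP negb_and h1 eq_sym (D2 hr I b'A b'X) orbT //.
  have ev : b.1 = b'.1.
    by apply: (Dt1 _ _ K) => //; rewrite clsP ?b1 ?b'1 ?h1 eqxx.
  exact: (h2r hr bA b'A bb' (or_introl ev) hb).
rewrite eb e'b /= in h2.
have [_ Ds1 _] := hcl _ (rhoV I b2) (rhoI I b2).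
have usb : us r0 (cls rho (rho b.2)) b.2 K.
  apply: (us_brk hr bA hK); rewrite clsP negb_and (D2 hr I bA bX) orbT //.
have usb' : us r0 (cls rho (rho b.2)) b'.2 K.
  apply: (us_brk hr b'A hK'); rewrite clsP negb_and h2 (D2 hr I b'A b'X) orbT //.
have ev : b.2 = b'.2.
  by apply: (Ds1 _ _ K) => //; rewrite clsP ?b2 ?b'2 ?h2 eqxx.
exact: (h2r hr bA b'A bb' (or_intror ev) hb).
Qed.

Lemma T_rigid f : is_iso f T T -> {in pnodes T, forall x, f x = x}.
Proof.
case=> fi fim far flab.
apply: (rigid (lab := plab T) T_tree _ flab T_h2).
by split.
Qed.

End Rig.

Section Final.
Variables (V : Type) (E : set (hedge V)) (N : finType) (r0 : ptree V N).
Hypothesis hE : higraph E.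
Hypothesis hr : is_path E r0.
Local Notation V0 := (pnodes r0).
Local Notation A0 := (parrows r0).
Local Notation Inv := (Inv E r0).
Local Notation Match := (Match r0).

Lemma seq_ident_eq s : forall rho X (T : ptree V N) t, Inv rho X -> Match T rho X ->
  is_glue_seq T s -> seq_ident T s T t -> s = t.
Proof.
elim: s => [|e s IH] rho X T [|e' t] I M //=.
case=> eT hs [[f [fiso fe]] hid].
have [b /andP[bA bX] eb] := arrT M eT.
have [e1T e2T] := arrow_in (T_tree hr I M) eT.
have fx := T_rigid hE hr I M fiso.
have ee' : e' = e by rewrite -fe !fx // -surjective_pairing.
rewrite ee' in hid *; congr cons.
rewrite eb in hs hid.
have I2 := inv_step hE hr I bA bX. have M2 := match_step hE hr I bA bX M.
apply: (IH _ _ _ _ I2 M2 hs hid).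
Qed.

End Final.

Lemma iso_id (V : Type) (N : finType) (T : ptree V N) : is_iso id T T.
Proof.
split.
- by move=> x y _ _.
- exact: finset.imset_id.
- apply/setP => z; apply/imsetP/idP => [[y yT ->]|zT]; first by rewrite -surjective_pairing.
  by exists z => //; rewrite -surjective_pairing.
- by [].
Qed.

Lemma seq_ident_refl (V : Type) (N : finType) s : forall (T : ptree V N), seq_ident T s T s.
Proof.
elim: s => [|e s IH] T /=; first by exists id; exact: iso_id.
split => //; exists id; split; [exact: iso_id | by rewrite -surjective_pairing].
Qed.

Lemma iso_comp (V : Type) (N1 N2 N3 : finType) (f : N1 -> N2) (g : N2 -> N3)
  (r1 : ptree V N1) (r2 : ptree V N2) (r3 : ptree V N3) :
  is_iso f r1 r2 -> is_iso g r2 r3 -> is_iso (g \o f) r1 r3.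
Proof.
case=> fi fim far flab [gi gim gar glab].
have fS : forall x, x \in pnodes r1 -> f x \in pnodes r2.
  by move=> x xS; rewrite -fim imset_f.
split.
- move=> x y xS yS /= h; apply: fi => //; apply: gi => //; exact: fS.
- by rewrite finset.imset_comp fim gim.
- rewrite -gar -far -finset.imset_comp; apply: eq_imset => a //.
- by move=> x xS /=; rewrite glab ?fS // flab.
Qed.



Section Model.
Variables (V : Type) (E : set (hedge V)) (N : finType) (r0 : ptree V N).
Hypothesis hE : higraph E.
Hypothesis hr : is_path E r0.
Local Notation V0 := (pnodes r0).
Local Notation A0 := (parrows r0).
Local Notation Inv := (Inv E r0).
Local Notation Match := (Match r0).

Lemma model_iso rho rho' X (T T' : ptree V N) : Inv rho X -> Inv rho' X ->
  Match T rho X -> Match T' rho' X -> is_iso rho' T T'.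
Proof.
move=> I I' M M'.
have equiv : forall x y, x \in V0 -> y \in V0 -> (rho x == rho y) = (rho' x == rho' y).
  move=> x y xV yV; apply/eqP/eqP => h.
    by have := conn_rho I' (rho_conn I xV yV h).
  by have := conn_rho I (rho_conn I' xV yV h).
have rr : forall x, x \in V0 -> rho' (rho x) = rho' x.
  move=> x xV; apply: (conn_rho I'); rewrite xconnect_sym.
  by case: I => _ _ hc _ _; apply: hc.
have M0 := M; have M0' := M'.
case: M0 => hN hA hL; case: M0' => hN' hA' hL'.
split.
- move=> x y /(pT M) [xV rx] /(pT M) [yV ry] /eqP h.
  by rewrite -rx -ry; apply/eqP; rewrite equiv.
- apply/setP => z; rewrite hN'; apply/imsetP/idP.
    case=> x /(pT M) [xV _] ->.
    by rewrite inE (rhoV I' xV) (rhoI I' xV) eqxx.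
  rewrite inE => /andP[zV /eqP rz]; exists (rho z); first by have := rho_pT I M zV.
  by rewrite rr.
- rewrite hA hA'; apply/setP => z; apply/imsetP/imsetP.
    case=> c /imsetP [b bD ->] ->; exists b => //=.
    move: bD; rewrite finset.in_setD => /andP[_ bA]; have [b1 b2] := arrowV0 hr bA.
    by rewrite !rr.
  case=> b bD ->; exists (rho b.1, rho b.2); first by apply/imsetP; exists b.
  move: bD; rewrite finset.in_setD => /andP[_ bA]; have [b1 b2] := arrowV0 hr bA.
  by rewrite /= !rr.
- move=> x xT; have [xV rx] := pT M xT.
  rewrite hL' ?hL //; last by rewrite hN' inE (rhoV I' xV) (rhoI I' xV) eqxx.
  rewrite /mlab; congr lab; apply/setP => z; rewrite !clsP.
  case zV: (z \in V0) => //=.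
  by rewrite -(equiv _ _ zV xV) rx.
Qed.

End Model.

Lemma count_perm (T0 : finType) k (O : {set k.-tuple T0}) :
  (forall a : k.-tuple T0, a \in O -> uniq a) ->
  (forall a b : k.-tuple T0, a \in O -> uniq b -> [set x in a]%SET = [set x in b]%SET -> b \in O) ->
  (k`! %| #|O|)%N.
Proof.
move=> hu hp.
rewrite -sum1_card (partition_big (fun a : k.-tuple T0 => [set x in a]%SET) predT) //=.
apply: dvdn_sum => X _; rewrite sum1dep_card.
case: (pickP (fun a => (a \in O) && ([set x in a]%SET == X))) => [a0 /andP[a0O /eqP a0X]|none]; last first.
  by rewrite eq_card0 ?dvdn0 // => a; rewrite inE; exact: none.
have cardt : forall t : k.-tuple T0, uniq t -> #|[set x in t]%SET| = k.
  by move=> t ut; rewrite cardsE; move/card_uniqP: ut => ->; rewrite size_tuple.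
have cX : #|X| = k by rewrite -a0X cardt ?hu.
rewrite (_ : [set a | _] = [set t : k.-tuple T0 | all [pred x | x \in X] t & uniq t]).
  rewrite card_uniq_tuples (eq_card (B := X)) ?cX ?ffactnn //.
apply/setP => t; rewrite !inE; apply/andP/andP.
  case=> tO /eqP tX; split; last exact: hu.
  by apply/allP => x xt; rewrite /= -tX inE.
case=> /allP al ut.
have sub : [set x in t]%SET \subset X.
  by apply/fintype.subsetP => x; rewrite inE => /al.
have eqX : [set x in t]%SET = X.
  by apply/eqP; rewrite finset.eqEcard sub cX (cardt t ut) /=.
split; last by rewrite eqX.
by apply: hp a0O ut _; rewrite a0X eqX.
Qed.



Theorem lemma2p12 (V : Type) (E : set (hedge V)) (k : nat)
    (N N' : finType) (r : ptree V N) (r' : ptree V N') :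
  higraph E -> (1 <= k)%N -> is_path E r -> is_path E r' ->
  (k`! %| num_glue_seqs r r' k)%N.
Proof.
move=> hE _ hr _.
pose G := glue_seqs r r' k.
have I0 := inv0 hr; have M0 := match0 hr.
have step1 : num_glue_seqs r r' k = #|G|.
  rewrite /num_glue_seqs -/G.
  rewrite (@eq_in_imset _ _ _ (fun s : k.-tuple (N * N) => [set s]%SET)).
    by rewrite card_imset //; exact: set1_inj.
  move=> s sG; apply/setP => t; rewrite !inE.
  have := sG; rewrite /G /glue_seqs inE => /asboolP [hs _].
  apply/andP/eqP => [[tG /asboolP hid]|->].
    apply: val_inj; apply/esym; exact: (seq_ident_eq hE hr I0 M0 hs hid).
  split; first by move: sG; rewrite /G inE.
  by apply/asboolP; have := @seq_ident_refl _ _ s r.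
have szP : forall a : k.-tuple (N * N), size (Phi id a) == k.
  by move=> a; rewrite size_Phi size_tuple.
pose tPhi := fun a : k.-tuple (N * N) => Tuple (szP a).
pose O := [set a : k.-tuple (N * N) | valid r finset.set0 a &&
                `[< iso_ptree (glue_end r (Phi id a)) r' >]].
have step2 : G = tPhi @: O.
  apply/setP => s; apply/idP/imsetP.
    rewrite inE => /asboolP [hs hiso].
    have [a0 va0 ha0] := surj hE hr I0 M0 hs.
    have sz : size a0 == k by rewrite -(size_Phi id a0) ha0 size_tuple.
    exists (Tuple sz).
      by rewrite inE /= va0 /=; apply/asboolP; rewrite ha0.
    by apply: val_inj => /=; rewrite ha0.
  case=> a; rewrite inE => /andP[va /asboolP hiso] ->.
  rewrite inE; apply/asboolP; have [g1 _ _] := run hE hr I0 M0 va; split => //.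
have step3 : #|G| = #|O|.
  rewrite step2 card_in_imset // => a b; rewrite !inE => /andP[va _] /andP[vb _] e.
  apply: val_inj; apply: (inj hE hr I0 va vb).
  by have := congr1 val e.
rewrite step1 step3; apply: count_perm.
  by move=> a; rewrite inE => /andP[/andP[ua _] _].
move=> a b; rewrite !inE => /andP[va /asboolP hiso] ub hab.
have vb : valid r finset.set0 b.
  rewrite /valid ub /=; apply/allP => x xb.
  have : x \in [set x in a]%SET by rewrite hab inE.
  rewrite inE => xa; move: va => /andP[_ /allP /(_ x xa)] //.
rewrite vb /=; apply/asboolP.
have [_ Ia Ma] := run hE hr I0 M0 va; have [_ Ib Mb] := run hE hr I0 M0 vb.
rewrite -hab in Ib Mb.
have iso := model_iso hr Ib Ia Mb Ma.
case: hiso => g hg; exists (g \o Rend id a); exact: iso_comp iso hg.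
Qed.
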